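(* Let $n\ge 2$ and $N=\{1,\dots,n\}$. Consider the randomized selection mechanism Simple $k$-sample on $\mathcal{G}_n$, with $k=\left\lceil 4^{1/3} n^{2/3} \ln^{1/3} n\right\rceil$: it forms a sample $S$ by selecting $k$ times a vertex of $N$ uniformly at random with replacement ($S$ is a multiset), and returns as winner (if any) a vertex $w\in\arg\max_{u\in N\setminus S}\delta_S(u,\mathbf{x})$, where in $\delta_S(u,\mathbf{x})$ each edge from a vertex of $S$ is counted with the multiplicity of that vertex in $S$. Then this mechanism is impartial and $\Theta(n^{2/3}\ln^{1/3} n)$-additive, i.e., $\max_{\mathbf{x}\in\mathcal{G}_n}\{\Delta(\mathbf{x})-\mathbb{E}[\delta(f(\mathbf{x}))]\}=O(n^{2/3}\ln^{1/3}n)$.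
   Context: $\mathcal{G}_n$ is the set of all directed graphs (nomination profiles) on vertex set $N=\{1,\dots,n\}$ with no self-loops; each vertex may have any out-degree (including $0$). For a profile $\mathbf{x}$, $x_u$ is the set of outgoing edges of $u$, and $(x'_u,\mathbf{x}_{-u})$ is the profile in which $u$'s outgoing edges are replaced by $x'_u$. $\delta_S(u,\mathbf{x})$ is the in-degree of $u$ counting only edges originating from $S$; $\delta(u,\mathbf{x})=\delta_N(u,\mathbf{x})$; $\Delta(\mathbf{x})=\max_u\delta(u,\mathbf{x})$. A selection mechanism $f$ maps each profile to a probability distribution over the vertices together with the option of no winner. It is impartial if for every profile $\mathbf{x}$, every vertex $u$ and every alternative set of outgoing edges $x'_u$, the probability that $u$ is selected is the same under $\mathbf{x}$ and $(x'_u,\mathbf{x}_{-u})$. $\mathbb{E}[\delta(f(\mathbf{x}))]=\sum_u \Pr[f(\mathbf{x})=u]\,\delta(u,\mathbf{x})$ (no winner contributes $0$). $f$ is $\alpha(n)$-additive if $\max_{\mathbf{x}\in\mathcal{G}_n}\{\Delta(\mathbf{x})-\mathbb{E}[\delta(f(\mathbf{x}))]\}\le\alpha(n)$ for every $n$. *)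

(* Defs.v *)
From HB Require Import structures.
From mathcomp Require Import all_boot all_order all_algebra.
From mathcomp Require Import all_classical all_reals all_analysis.
Set Implicit Arguments. Unset Strict Implicit. Unset Printing Implicit Defensive.
Import Order.TTheory GRing.Theory Num.Theory.

(* Vertex set N = {1,...,n} is modelled by 'I_n.
   A nomination profile assigns to each vertex its set of out-neighbours. *)
Definition profile (n : nat) := {ffun 'I_n -> {set 'I_n}}.

Definition valid_profile n (x : profile n) : Prop := forall u, u \notin x u.

(* in-degree of u counting only edges from the sample s (a sequence = multiset,
   each vertex counted with its multiplicity in s) *)
Definition indegS n (s : seq 'I_n) (x : profile n) (u : 'I_n) : nat :=
  count (fun v => u \in x v) s.

Definition indeg n (x : profile n) (u : 'I_n) : nat :=
  #|[set v | u \in x v]|.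

Definition maxindeg n (x : profile n) : nat := \max_(u : 'I_n) indeg x u.

(* The winner of Simple k-sample for a given sample s : a vertex of N \ S
   maximizing delta_S (ties broken by a fixed rule: [arg max] of fintype),
   or no winner if N \ S is empty. *)
Definition winner n k (s : k.-tuple 'I_n) (x : profile n) : option 'I_n :=
  match [pick u | u \notin s] with
  | Some u0 => Some [arg max_(w > u0 | w \notin s) indegS s x w]
  | None => None
  end.

Local Open Scope ring_scope.

(* Pr[f(x) = u], sample drawn uniformly among the n^k ordered k-tuples
   (k independent uniform draws with replacement) *)
Definition prob_win (R : realType) n k (x : profile n) (u : 'I_n) : R :=
  (#|[set s : k.-tuple 'I_n | winner s x == Some u]|%:R) / ((n ^ k)%N%:R).

(* E[delta(f(x))] ; no winner contributes 0 *)
Definition exp_deg (R : realType) n k (x : profile n) : R :=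
  (\sum_(s : k.-tuple 'I_n)
      (match winner s x with Some w => indeg x w | None => 0%N end)%:R)
  / ((n ^ k)%N%:R).

Definition ksample (R : realType) (n : nat) : nat :=
  `| Num.ceil (powR (4 : R) (1/3) * powR (n%:R) (2/3) * powR (ln (n%:R)) (1/3)) |%N.

Definition impartial (R : realType) n k : Prop :=
  forall (x x' : profile n) (u : 'I_n),
    valid_profile x -> valid_profile x' ->
    (forall v, v != u -> x' v = x v) ->
    prob_win R k x u = prob_win R k x' u.

(* Main.v *)
Require Import Defs.
From HB Require Import structures.
From mathcomp Require Import all_boot all_order all_algebra.
From mathcomp Require Import all_classical all_reals all_analysis.
From mathcomp Require Import ring lra.
Import Order.TTheory GRing.Theory Num.Theory.
Local Open Scope ring_scope.
Lemma prodsum (R : realType) (n k : nat) (F : 'I_k -> 'I_n -> R) :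
  \sum_(s : k.-tuple 'I_n) \prod_(i < k) F i (tnth s i) = \prod_(i < k) \sum_j F i j.
Proof.
rewrite bigA_distr_bigA /=.
rewrite (reindex (fun f : {ffun 'I_k -> 'I_n} => [tuple f i | i < k])) /=.
  by apply: eq_bigr => f _; apply: eq_bigr => i _; rewrite tnth_mktuple.
exists (fun s : k.-tuple 'I_n => [ffun i => tnth s i]) => [f _|s _].
  by apply/ffunP => i; rewrite ffunE tnth_mktuple.
by apply: eq_from_tnth => i; rewrite tnth_mktuple ffunE.
Qed.

Lemma prod_count (R : realType) (T : eqType) (r : R) (P : pred T) (s : seq T) :
  \prod_(y <- s) r ^+ (P y) = r ^+ count P s.
Proof.
elim: s => [|a s IH]; first by rewrite big_nil.
by rewrite big_cons IH /= exprD.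
Qed.

Lemma prod_notin (R : realType) (T : eqType) (u : T) (s : seq T) :
  \prod_(y <- s) ((y != u)%:R : R) = (u \notin s)%:R.
Proof.
elim: s => [|a s IH]; first by rewrite big_nil.
rewrite big_cons IH in_cons negb_or [u == a]eq_sym.
by case: (a != u); case: (u \in s); rewrite /= ?mulr1 ?mulr0 ?mul0r.
Qed.

Lemma sum_bool_card (R : realType) n (P : pred 'I_n) :
  \sum_(j : 'I_n) ((P j)%:R : R) = (#|P|)%:R.
Proof.
rewrite -sum1_card natr_sum [RHS]big_mkcond /=; apply: eq_bigr => j _.
by rewrite unfold_in; case: (P j).
Qed.

Lemma card_tuples (R : realType) n k :
  \sum_(s : k.-tuple 'I_n) (1 : R) = (n ^ k)%N%:R.
Proof. by rewrite sumr_const card_tuple card_ord -[_ *+ _]mulr_natl mulr1. Qed.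

Lemma sum_in (R : realType) n k (u : 'I_n) :
  \sum_(s : k.-tuple 'I_n) ((u \in s)%:R : R) = (n ^ k)%N%:R - (n.-1)%:R ^+ k.
Proof.
have H s : ((u \in s)%:R : R) = 1 - \prod_(i < k) ((tnth s i != u)%:R).
  have := big_tuple 1 *%R s predT (fun y => ((y != u)%:R : R)).
  rewrite prod_notin => <-.
  by case: (u \in s); rewrite /= ?subr0 ?subrr.
rewrite (eq_bigr _ (fun s _ => H s)) sumrB card_tuples (@prodsum R n k (fun _ y => ((y != u)%:R : R))).
congr (_ - _).
rewrite (eq_bigr (fun _ => (n.-1)%:R)) ?prodr_const ?card_ord // => i _.
rewrite (@sum_bool_card R n (fun j => j != u)).
by rewrite -[in RHS](card_ord n) -(cardC1 u).
Qed.

Lemma bern (R : realType) (a b : R) k : 0 <= a -> a <= b -> b - a <= 1 ->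
  b * (b ^+ k - a ^+ k) <= k%:R * b ^+ k.
Proof.
move=> a0 ab ba1.
have b0 : 0 <= b by apply: le_trans ab.
elim: k => [|k IH]; first by rewrite !expr0 subrr mulr0 mul0r.
have akbk : a ^+ k <= b ^+ k by apply: lerXn2r.
have ak0 : 0 <= a ^+ k by apply: exprn_ge0.
have e : b * (b ^+ k.+1 - a ^+ k.+1) = b * (b * (b ^+ k - a ^+ k)) + b * (a ^+ k * (b - a)).
  by rewrite !exprS; ring.
rewrite e exprS -natr1 mulrDl mul1r.
have h1 : b * (b * (b ^+ k - a ^+ k)) <= k%:R * (b * b ^+ k).
  by apply: le_trans (ler_wpM2l b0 IH) _; rewrite mulrCA.
have h2 : b * (a ^+ k * (b - a)) <= b * b ^+ k.
  apply: ler_wpM2l => //.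
  rewrite -[b ^+ k]mulr1; apply: ler_pM => //; by rewrite subr_ge0.
exact: lerD h1 h2.
Qed.

Lemma sum_bool_cards (R : realType) n (P : pred 'I_n) :
  \sum_(j : 'I_n) ((P j)%:R : R) = (#|[set j | P j]|)%:R.
Proof.
rewrite -sum1dep_card natr_sum [RHS]big_mkcond /=; apply: eq_bigr => j _.
by case: (P j).
Qed.

Lemma bad_bound (R : realType) n k (x : profile n) (u v : 'I_n) (t : R) :
  (0 < n)%N -> 0 <= t -> t <= (indeg x u)%:R - (indeg x v)%:R ->
  \sum_(s : k.-tuple 'I_n) ((indegS s x u <= indegS s x v)%N%:R : R)
    <= (n ^ k)%N%:R * expR (- (k%:R * (t ^+ 2 / (4 * n%:R ^+ 2)))).
Proof.
move=> n0 t0 tD.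
set N : R := n%:R.
have N0 : 0 < N by rewrite ltr0n.
set e := t / (2 * N).
have e0 : 0 <= e by apply: divr_ge0 => //; apply: mulr_ge0 => //; apply: ltW.
set r := 1 + e.
have r1 : 1 <= r by rewrite /r lerDl.
have r0 : 0 < r by apply: lt_le_trans r1.
pose g (y : 'I_n) : R := r ^+ (v \in x y) * (r^-1) ^+ (u \in x y).
have Hs : forall s : k.-tuple 'I_n,
    ((indegS s x u <= indegS s x v)%N%:R : R) <= \prod_(i < k) g (tnth s i).
  move=> s; have := big_tuple 1 *%R s predT g; move=> <-.
  rewrite /g big_split /=.
  rewrite (@prod_count R _ r (fun y => v \in x y)) (@prod_count R _ r^-1 (fun y => u \in x y)).
  rewrite /indegS; case: leqP => h /=.
    rewrite exprVn ler_pdivlMr ?exprn_gt0 // mul1r.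
    exact: ler_weXn2l.
  by apply: mulr_ge0; apply: exprn_ge0; rewrite ?invr_ge0; apply: ltW.
apply: le_trans (ler_sum _ (fun s _ => Hs s)) _.
rewrite (@prodsum R n k (fun _ y => g y)) prodr_const card_ord.
have gy : forall y, g y <= 1 + e * ((v \in x y)%:R - (u \in x y)%:R) + e ^+ 2.
  move=> y; rewrite /g; case: (v \in x y); case: (u \in x y);
    rewrite /= ?expr0 ?expr1 ?mul1r ?mulr1.
  - rewrite mulrV ?unitfE ?gt_eqF // subrr mulr0 addr0 lerDl; exact: sqr_ge0.
  - rewrite subr0 mulr1 /r lerDl; exact: sqr_ge0.
  - rewrite -[r^-1]mul1r ler_pdivrMr // /r sub0r mulrN1.
    have : 0 <= e ^+ 3 by apply: exprn_ge0.
    rewrite !exprS expr0 => h; nra.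
  - rewrite subrr mulr0 addr0 lerDl; exact: sqr_ge0.
have Hsum : \sum_y g y <= N * (1 - t ^+ 2 / (4 * N ^+ 2)).
  apply: le_trans (ler_sum _ (fun y _ => gy y)) _.
  rewrite big_split /= big_split /= -mulr_sumr sumrB !sumr_const card_ord.
  rewrite (@sum_bool_cards R n (fun y => v \in x y)) (@sum_bool_cards R n (fun y => u \in x y)).
  rewrite -/(indeg x v) -/(indeg x u) -/N -[e ^+ 2 *+ n]mulr_natr -/N.
  have h1 : e * ((indeg x v)%:R - (indeg x u)%:R) <= - (e * t).
    rewrite -mulrN; apply: ler_wpM2l => //; rewrite lerNr opprB; exact: tD.
  have -> : N * (1 - t ^+ 2 / (4 * N ^+ 2)) = N - e * t + N * e ^+ 2.
    rewrite /e; field; exact: lt0r_neq0.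
  rewrite [N * _]mulrC -!addrA lerD2l lerD2r; exact: h1.
have g0 : 0 <= \sum_y g y.
  apply: sumr_ge0 => y _; apply: mulr_ge0; apply: exprn_ge0; rewrite ?invr_ge0; apply: ltW => //.
have a0 : 0 <= 1 - t ^+ 2 / (4 * N ^+ 2).
  by rewrite -(pmulr_rge0 _ N0); apply: le_trans Hsum.
apply: le_trans (lerXn2r k _ _ Hsum) _; rewrite ?inE //; first exact: mulr_ge0 (ltW N0) a0.
rewrite exprMn natrX -/N; apply: ler_wpM2l; first exact: exprn_ge0 (ltW N0).
rewrite -[in X in expR X]mulrN expRM_natl.
apply: lerXn2r; rewrite ?nnegrE ?expR_ge0 ?a0 //.
exact: expR_ge1Dx.
Qed.

Definition wval n k (s : k.-tuple 'I_n) (x : profile n) : nat :=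
  match winner s x with Some w => indeg x w | None => 0%N end.
Arguments wval {n k}.

Lemma winner_notin {n k} (s : k.-tuple 'I_n) x w : winner s x = Some w -> w \notin s.
Proof.
rewrite /winner; case: pickP => [u0 Hu0|_] //; case=> <-.
by case: (@arg_maxnP _ u0 (fun w => w \notin s) (fun w => indegS s x w) Hu0).
Qed.

Lemma winner_max {n k} (s : k.-tuple 'I_n) x u : u \notin s ->
  exists w, winner s x = Some w /\ w \notin s /\ (indegS s x u <= indegS s x w)%N.
Proof.
move=> Hu; rewrite /winner; case: pickP => [u0 Hu0|H]; last by rewrite H in Hu.
case: (@arg_maxnP _ u0 (fun w => w \notin s) (fun w => indegS s x w) Hu0) => w Pw Hmax.
by exists w; split => //; split => //; apply: Hmax.
Qed.

Lemma winner_eq {n k} (s : k.-tuple 'I_n) x x' :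
  (forall w, indegS s x w = indegS s x' w) -> winner s x = winner s x'.
Proof.
move=> H; rewrite /winner; case: pickP => // u0 _.
congr (Some (arg_max _ _ _)); apply: boolp.funext => w; exact: H.
Qed.

Lemma impartial_all (R : realType) n k : impartial R n k.
Proof.
move=> x x' u _ _ Hx; rewrite /prob_win; congr (_%:R / _).
apply: eq_card => s; rewrite !inE.
case Hu: (u \in s).
  have F y : (winner s y == Some u) = false.
    by apply/negbTE/eqP => /winner_notin; rewrite Hu.
  by rewrite !F.
rewrite (@winner_eq n k s x x') // => w; rewrite /indegS; apply: eq_in_count => v Hv /=.
rewrite Hx //; apply/eqP => e; by rewrite -e Hv in Hu.
Qed.

Lemma indeg_le {n} (x : profile n) w : (indeg x w <= n)%N.
Proof. by rewrite /indeg -[X in (_ <= X)%N]card_ord max_card. Qed.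

Lemma pointwise (R : realType) n k (x : profile n) (u : 'I_n) (s : k.-tuple 'I_n) (t : R) :
  0 <= t ->
  ((indeg x u)%:R - (wval s x)%:R : R) <= t + n%:R * (u \in s)%:R +
     n%:R * \sum_(v | t < (indeg x u)%:R - (indeg x v)%:R)
              ((indegS s x u <= indegS s x v)%N%:R).
Proof.
move=> t0.
set S := \sum_(v | _) _.
have S0 : 0 <= S by apply: sumr_ge0 => v _; apply: ler0n.
have nS : 0 <= n%:R * S by apply: mulr_ge0 => //; apply: ler0n.
have du : (indeg x u)%:R - (wval s x)%:R <= (n%:R : R).
  have := indeg_le x u; rewrite -(ler_nat R) => h.
  have : 0 <= ((wval s x)%:R : R) by apply: ler0n.
  lra.
case Hin: (u \in s).
  rewrite /= mulr1; lra.
have [w [Hw [wn Hmax]]] := winner_max s x u (negbT Hin).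
rewrite /wval Hw /= mulr0 addr0.
case: (leP ((indeg x u)%:R - (indeg x w)%:R) t) => h.
  lra.
have S1 : 1 <= S.
  rewrite /S (bigD1 w) //= Hmax /=.
  rewrite lerDl; apply: sumr_ge0 => v _; apply: ler0n.
have : (n%:R : R) <= n%:R * S.
  by rewrite -[X in X <= _]mulr1; apply: ler_wpM2l => //; apply: ler0n.
move: du; rewrite /wval Hw => du.
lra.
Qed.

Lemma sum_filter_le (R : realType) n (P : pred 'I_n) (F : 'I_n -> R) (C : R) :
  0 <= C -> (forall v, P v -> 0 <= F v <= C) -> \sum_(v | P v) F v <= n%:R * C.
Proof.
move=> C0 H; rewrite big_mkcond /=.
have H2 : forall v : 'I_n, true -> (if P v then F v else 0) <= C.
  by move=> v _; case: (P v) (H v) => [/(_ isT)/andP[]|].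
apply: le_trans (ler_sum _ H2) _.
by rewrite sumr_const card_ord mulr_natl.
Qed.

Lemma loss_bound (R : realType) n k (x : profile n) (u : 'I_n) (t : R) :
  (0 < n)%N -> 0 <= t ->
  (indeg x u)%:R - exp_deg R k x
    <= t + k%:R + n%:R ^+ 2 * expR (- (k%:R * (t ^+ 2 / (4 * n%:R ^+ 2)))).
Proof.
move=> n0 t0.
set E := expR _.
have E0 : 0 <= E by apply: expR_ge0.
set N : R := (n ^ k)%N%:R.
have N0 : 0 < N by rewrite ltr0n expn_gt0 n0.
set D : R := (indeg x u)%:R.
have -> : exp_deg R k x = (\sum_(s : k.-tuple 'I_n) ((wval s x)%:R : R)) / N by [].
set B := t + _ + _.
suff H : D * N - \sum_(s : k.-tuple 'I_n) ((wval s x)%:R : R) <= B * N.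
  have -> : D - (\sum_(s : k.-tuple 'I_n) ((wval s x)%:R : R)) / N
          = (D * N - \sum_(s : k.-tuple 'I_n) ((wval s x)%:R : R)) / N.
    by field; apply: lt0r_neq0.
  by rewrite ler_pdivrMr.
have -> : D * N = \sum_(s : k.-tuple 'I_n) D.
  by rewrite /N -card_tuples mulr_sumr; apply: eq_bigr => s _; rewrite mulr1.
rewrite -sumrB.
have HP : \sum_(s : k.-tuple 'I_n) (D - (wval s x)%:R) <=
    \sum_(s : k.-tuple 'I_n) (t + n%:R * (u \in s)%:R +
     n%:R * \sum_(v | t < D - (indeg x v)%:R)
              ((indegS s x u <= indegS s x v)%N%:R)).
  by apply: ler_sum => s _; exact: pointwise.
apply: le_trans HP _.
rewrite big_split /= big_split /= -!mulr_sumr sumr_const card_tuple card_ord.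
rewrite exchange_big /=.
have h1 : n%:R * \sum_(s : k.-tuple 'I_n) ((u \in s)%:R : R) <= k%:R * N.
  rewrite sum_in /N natrX.
  have e : (n%:R : R) = (n.-1)%:R + 1 by rewrite natr1 prednK.
  apply: bern; first exact: ler0n.
    by rewrite e lerDl.
  rewrite e; lra.
have h2 : \sum_(v | t < D - (indeg x v)%:R)
            \sum_(s : k.-tuple 'I_n) ((indegS s x u <= indegS s x v)%N%:R : R)
          <= n%:R * (N * E).
  apply: sum_filter_le; first by apply: mulr_ge0 => //; apply: ltW.
  move=> v Pv; apply/andP; split.
    by apply: sumr_ge0 => s _; apply: ler0n.
  by apply: bad_bound => //; apply: ltW.
have h3 : 0 <= (n%:R : R) by apply: ler0n.
have h4 := ler_wpM2l h3 h2.
rewrite /B -/N.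
have -> : t *+ (n ^ k) = t * N by rewrite /N mulr_natr.
have e2 : (t + k%:R + n%:R ^+ 2 * E) * N = t * N + k%:R * N + n%:R * (n%:R * (N * E)).
  by ring.
rewrite e2; lra.
Qed.

Theorem mainTheorem1 (R : realType) :
  (forall n : nat, (2 <= n)%N -> impartial R n (ksample R n)) /\
  (exists C : R, forall n : nat, (2 <= n)%N ->
     forall x : profile n, valid_profile x ->
       (maxindeg x)%:R - exp_deg R (ksample R n) x
         <= C * (powR (n%:R) (2/3) * powR (ln (n%:R)) (1/3))).
Proof.
split; first by move=> n _; exact: impartial_all.
set c4 : R := powR 4 (1/3).
have c41 : 1 <= c4.
  rewrite /c4 -[X in X <= _](powRr0 4); apply: ler_powR; first by rewrite ler1n.
  lra.
exists (5 + c4) => n n2 x _.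
have n0 : (0 < n)%N by apply: leq_trans n2.
set a := powR n%:R (2/3).
set L := ln n%:R.
set b := powR L (1/3).
have Nn : (2%:R : R) <= n%:R by rewrite ler_nat.
have Npos : (0 : R) < n%:R by rewrite ltr0n.
have L12 : 1/2 <= L.
  have := expR_ge1Dx (- L); rewrite expRN /L lnK ?posrE // -/L => h.
  have : n%:R * (1 - L) <= 1.
    rewrite -[X in _ <= X](@mulfV _ n%:R); last exact: lt0r_neq0.
    apply: ler_wpM2l; [exact: ltW | lra].
  move=> h2; nra.
have L0 : 0 <= L by lra.
have a0 : 0 <= a by apply: powR_ge0.
have b0 : 0 <= b by apply: powR_ge0.
have M3 : (a * b) ^+ 3 = n%:R ^+ 2 * L.
  rewrite exprMn /a /b -!powR_mulrn ?powR_ge0 // -!powRrM.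
  have -> : (2/3 : R) * 3%:R = 2%:R by field.
  have -> : (1/3 : R) * 3%:R = 1 by field.
  by rewrite powR_mulrn ?ler0n // powRr1.
set M := a * b.
have M0 : 0 <= M by apply: mulr_ge0.
have M2 : 2 <= M ^+ 3.
  rewrite M3; nra.
have M1 : 1 <= M.
  case: (leP M 1) => hM; last exact: ltW.
  have := exprn_ile1 3 M0 hM; lra.
set k := ksample R n.
have kdef : (k%:R : R) = (Num.ceil (c4 * a * b))%:~R.
  rewrite /k /ksample -/c4 -/a -/L -/b natr_absz ger0_norm // ceil_ge0.
  have : 0 <= c4 * a * b by apply: mulr_ge0 => //; apply: mulr_ge0 => //; lra.
  lra.
have cM : c4 * a * b = c4 * M by rewrite /M mulrA.
have kM : M <= k%:R.
  rewrite kdef; apply: le_trans (ceil_ge _); rewrite cM.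
  by rewrite -[X in X <= _]mul1r; apply: ler_wpM2r.
have kM2 : k%:R <= c4 * M + 1.
  rewrite kdef -cM; have := ceil_itv (c4 * a * b); rewrite intrD => /andP[h _].
  rewrite intrN in h; lra.
have -> : maxindeg x = indeg x [arg max_(i > Ordinal n0) indeg x i].
  by rewrite /maxindeg (bigop.bigmax_eq_arg (Ordinal n0)).
apply: le_trans (@loss_bound R n k x _ (3 * M) n0 _) _; first lra.
set X := k%:R * _.
have HX : 2 * L <= X.
  rewrite /X mulrA ler_pdivlMr; last by apply: mulr_gt0; [lra | apply: exprn_gt0].
  have h1 : M * (3 * M) ^+ 2 <= k%:R * (3 * M) ^+ 2 by apply: ler_wpM2r => //; apply: sqr_ge0.
  have h2 : M * (3 * M) ^+ 2 = 9 * (n%:R ^+ 2 * L) by rewrite -M3 /M; ring.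
  have h3 : 2 * L * (4 * n%:R ^+ 2) = 8 * (n%:R ^+ 2 * L) by ring.
  have h4 : 0 <= n%:R ^+ 2 * L by apply: mulr_ge0 => //; apply: sqr_ge0.
  lra.
have HE : n%:R ^+ 2 * expR (- X) <= 1.
  have : expR (- X) <= expR (- (2%:R * L)) by rewrite ler_expR; lra.
  move=> h; rewrite [in X in _ <= X]expRN expRM_natl /L lnK ?posrE // in h.
  have n20 : (0 : R) < n%:R ^+ 2 by apply: exprn_gt0.
  apply: le_trans (ler_wpM2l (ltW n20) h) _.
  by rewrite mulfV // lt0r_neq0.
have e : (5 + c4) * M = 5 * M + c4 * M by ring.
rewrite e; lra.
Qed.
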